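(* Let $n\ge5$ and let $R\in\mathcal C_{1,0}$. Then $R$ lies in the PIC2 cone. Moreover, if $\mathrm{Ric}(R)(v,v)=0$ for some unit vector $v\in\mathbb{R}^n$, then $R=c\,(\mathrm{id}-2\,v\otimes v)\odot\mathrm{id}$ for some constant $c\ge0$ (i.e. either $R=0$ or $R$ is the curvature tensor of a round cylinder $S^{n-1}\times\mathbb{R}$ with axis $v$).
   Context: An algebraic curvature tensor on $\mathbb{R}^n$ is a tensor $R=(R_{ijkl})$ with $R_{ijkl}=-R_{jikl}=R_{klij}$ and $R_{ijkl}+R_{jkil}+R_{kijl}=0$; the unit round sphere has $R_{ijkl}=\delta_{ik}\delta_{jl}-\delta_{il}\delta_{jk}$. We write $\mathrm{Ric}(R)_{ik}=\sum_j R_{ijkj}$, $\mathrm{scal}(R)=\sum_i\mathrm{Ric}(R)_{ii}$, $\mathrm{Ric}_0(R)=\mathrm{Ric}(R)-\frac1n\mathrm{scal}(R)\,\mathrm{id}$. For symmetric bilinear forms $A,B$, $(A\odot B)_{ijkl}=A_{ik}B_{jl}-A_{il}B_{jk}-A_{jk}B_{il}+A_{jl}B_{ik}$; $\mathrm{id}=(\delta_{ij})$. The PIC2 cone is the set of algebraic curvature tensors $R$ with $R(z,w,\bar z,\bar w)\ge0$ for all $z,w\in\mathbb{C}^n$ ($R$ extended complex-multilinearly). For $\sigma\in(0,2]$ and $\theta\ge0$, $\mathcal{C}_{\sigma,\theta}$ denotes the set of algebraic curvature tensors $R$ that can be written $R=S+H\odot\mathrm{id}$, where $S$ is an algebraic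 curvature tensor in the PIC2 cone with $\mathrm{Ric}_0(S)=0$ and $H$ is a symmetric bilinear form with $\mathrm{tr}(H)\,\mathrm{id}-(n-2\sigma)H$ positive semidefinite and $\mathrm{tr}(H)-\theta\,\mathrm{scal}(S)\ge0$. *)

(* Defs.v *)
(* Scalars live in an arbitrary numeric closed field C
   (e.g. algC); "real" objects are those with entries in Num.real, and
   C^n plays the role of the complexification of R^n. *)
From HB Require Import structures.
From mathcomp Require Import all_boot all_order all_algebra.
Set Implicit Arguments. Unset Strict Implicit. Unset Printing Implicit Defensive.
Import Order.TTheory GRing.Theory Num.Theory.
Local Open Scope ring_scope.

Section Curv.
Variables (C : numClosedFieldType) (n : nat).

Definition vec := 'I_n -> C.
Definition form := 'I_n -> 'I_n -> C.
Definition tensor4 := 'I_n -> 'I_n -> 'I_n -> 'I_n -> C.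

Definition real_vec (x : vec) : Prop := forall i, x i \is Num.real.
Definition real_form (A : form) : Prop := forall i j, A i j \is Num.real.
Definition real_tensor (R : tensor4) : Prop :=
  forall i j k l, R i j k l \is Num.real.

Definition is_ACT (R : tensor4) : Prop :=
  real_tensor R /\
  (forall i j k l, R i j k l = - R j i k l) /\
  (forall i j k l, R i j k l = R k l i j) /\
  (forall i j k l, R i j k l + R j k i l + R k i j l = 0).

Definition Ric (R : tensor4) : form := fun i k => \sum_(j < n) R i j k j.
Definition scal (R : tensor4) : C := \sum_(i < n) Ric R i i.
Definition idf : form := fun i j => (i == j)%:R.
Definition Ric0 (R : tensor4) : form :=
  fun i k => Ric R i k - (n%:R)^-1 * scal R * idf i k.
Definition tr (H : form) : C := \sum_(i < n) H i i.

Definition odot (A B : form) : tensor4 := fun i j k l =>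
  A i k * B j l - A i l * B j k - A j k * B i l + A j l * B i k.

Definition sym_form (H : form) : Prop :=
  real_form H /\ forall i j, H i j = H j i.

Definition psd (M : form) : Prop :=
  forall x : vec, real_vec x -> 0 <= \sum_(i < n) \sum_(j < n) x i * M i j * x j.

(* PIC2: R(z,w,zbar,wbar) >= 0 for all z, w in C^n (complex-multilinear extension) *)
Definition PIC2 (R : tensor4) : Prop :=
  forall z w : vec,
    0 <= \sum_(i < n) \sum_(j < n) \sum_(k < n) \sum_(l < n)
           R i j k l * z i * w j * (z k)^* * (w l)^*.

Definition cone_C (sigma theta : C) (R : tensor4) : Prop :=
  is_ACT R /\
  exists (S : tensor4) (H : form),
    is_ACT S /\ PIC2 S /\ (forall i k, Ric0 S i k = 0) /\ sym_form H /\
    psd (fun i j => tr H * idf i j - (n%:R - 2 * sigma) * H i j) /\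
    0 <= tr H - theta * scal S /\
    (forall i j k l, R i j k l = S i j k l + odot H idf i j k l).

End Curv.

(* Main.v *)
Require Import Defs.
From HB Require Import structures.
From mathcomp Require Import all_boot all_order all_algebra.
From mathcomp Require Import ring.
Set Implicit Arguments. Unset Strict Implicit. Unset Printing Implicit Defensive.
Import Order.TTheory GRing.Theory Num.Theory.
Local Open Scope ring_scope.

Definition bil (C : numClosedFieldType) n (A : Defs.form C n) (x y : vec C n) : C :=
  \sum_(i < n) \sum_(j < n) x i * A i j * y j.

Definition ev (C : numClosedFieldType) n (p : 'I_n) : vec C n := fun a => @idf C n a p.

Lemma idfC (C : numClosedFieldType) n (a b : 'I_n) : @idf C n a b = @idf C n b a.
Proof. by rewrite /idf eq_sym. Qed.

Lemma sum_delta (C : numClosedFieldType) n (p : 'I_n) (F : 'I_n -> C) :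
  \sum_(a < n) @idf C n a p * F a = F p.
Proof.
rewrite (bigD1 p) //= big1 => [|a /negbTE ne]; first by rewrite /idf eqxx mul1r addr0.
by rewrite /idf ne mul0r.
Qed.

Lemma sum_delta_r (C : numClosedFieldType) n (p : 'I_n) (F : 'I_n -> C) :
  \sum_(a < n) F a * @idf C n a p = F p.
Proof. rewrite -[RHS](sum_delta p); apply: eq_bigr => a _; exact: mulrC. Qed.

Lemma bil_ev (C : numClosedFieldType) n (A : Defs.form C n) p q :
  bil A (@ev C n p) (@ev C n q) = A p q.
Proof.
rewrite /bil /ev.
under eq_bigr => i _ do rewrite sum_delta_r.
by rewrite (sum_delta p (fun i => A i q)).
Qed.

Lemma bil_linl (C : numClosedFieldType) n (A : Defs.form C n) (x x1 x2 y : vec C n) a b :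
  (forall i, x i = a * x1 i + b * x2 i) ->
  bil A x y = a * bil A x1 y + b * bil A x2 y.
Proof.
move=> hx; rewrite /bil !mulr_sumr -big_split; apply: eq_bigr => i _.
rewrite !mulr_sumr -big_split; apply: eq_bigr => j _; rewrite hx /=; ring.
Qed.

Lemma bil_linr (C : numClosedFieldType) n (A : Defs.form C n) (x y y1 y2 : vec C n) a b :
  (forall i, y i = a * y1 i + b * y2 i) ->
  bil A x y = a * bil A x y1 + b * bil A x y2.
Proof.
move=> hy; rewrite /bil !mulr_sumr -big_split; apply: eq_bigr => i _.
rewrite !mulr_sumr -big_split; apply: eq_bigr => j _; rewrite hy /=; ring.
Qed.

Lemma bil_sym (C : numClosedFieldType) n (A : Defs.form C n) (x y : vec C n) :
  (forall i j, A i j = A j i) -> bil A x y = bil A y x.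
Proof.
move=> hA; rewrite /bil exchange_big; apply: eq_bigr => i _; apply: eq_bigr => j _.
rewrite hA; ring.
Qed.

Definition Q4 (C : numClosedFieldType) n (T : tensor4 C n) (a b c d : vec C n) : C :=
  \sum_(i < n) \sum_(j < n) \sum_(k < n) \sum_(l < n) T i j k l * a i * b j * c k * d l.

Lemma sum4_factor (C : numClosedFieldType) n (X Y : 'I_n -> 'I_n -> C) :
  \sum_(i < n) \sum_(j < n) \sum_(k < n) \sum_(l < n) X i k * Y j l =
  (\sum_(i < n) \sum_(k < n) X i k) * (\sum_(j < n) \sum_(l < n) Y j l).
Proof.
rewrite mulr_suml; apply: eq_bigr => i _; rewrite exchange_big mulr_suml.
apply: eq_bigr => k _; rewrite mulr_sumr; apply: eq_bigr => j _.
by rewrite mulr_sumr.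
Qed.

Lemma sum4_lin (C : numClosedFieldType) n (f1 f2 f3 f4 : 'I_n -> 'I_n -> 'I_n -> 'I_n -> C) :
  \sum_(i < n) \sum_(j < n) \sum_(k < n) \sum_(l < n)
     (f1 i j k l - f2 i j k l - f3 i j k l + f4 i j k l) =
  \sum_(i < n) \sum_(j < n) \sum_(k < n) \sum_(l < n) f1 i j k l
  - \sum_(i < n) \sum_(j < n) \sum_(k < n) \sum_(l < n) f2 i j k l
  - \sum_(i < n) \sum_(j < n) \sum_(k < n) \sum_(l < n) f3 i j k l
  + \sum_(i < n) \sum_(j < n) \sum_(k < n) \sum_(l < n) f4 i j k l.
Proof.
do 4 (rewrite -!sumrB -big_split /=; apply: eq_bigr => ? _).
done.
Qed.

Lemma Q4_odot (C : numClosedFieldType) n (A B : Defs.form C n) (a b c d : vec C n) :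
  Q4 (odot A B) a b c d =
  bil A a c * bil B b d - bil A a d * bil B b c
  - bil A b c * bil B a d + bil A b d * bil B a c.
Proof.
have e1 : bil A a c * bil B b d = \sum_(i < n) \sum_(j < n) \sum_(k < n) \sum_(l < n)
    (a i * A i k * c k) * (b j * B j l * d l) by rewrite sum4_factor.
have e2 : bil A a d * bil B b c = \sum_(i < n) \sum_(j < n) \sum_(k < n) \sum_(l < n)
    (a i * A i l * d l) * (b j * B j k * c k).
  rewrite /bil -sum4_factor; apply: eq_bigr => i _; apply: eq_bigr => j _.
  exact: exchange_big.
have e3 : bil A b c * bil B a d = \sum_(i < n) \sum_(j < n) \sum_(k < n) \sum_(l < n)
    (b j * A j k * c k) * (a i * B i l * d l).
  by rewrite /bil -sum4_factor exchange_big.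
have e4 : bil A b d * bil B a c = \sum_(i < n) \sum_(j < n) \sum_(k < n) \sum_(l < n)
    (b j * A j l * d l) * (a i * B i k * c k).
  rewrite /bil -sum4_factor exchange_big; apply: eq_bigr => i _; apply: eq_bigr => j _.
  exact: exchange_big.
rewrite e1 e2 e3 e4 -sum4_lin /Q4.
do 4 (apply: eq_bigr => ? _).
rewrite /odot; ring.
Qed.


Definition om (C : numClosedFieldType) n (z w : vec C n) (a b : 'I_n) : C :=
  z a * w b - z b * w a.
Definition Pm (C : numClosedFieldType) n (z w : vec C n) (a b : 'I_n) : C :=
  \sum_(j < n) om z w a j * (om z w b j)^*.
Definition Zf (C : numClosedFieldType) n (A G : Defs.form C n) : C :=
  \sum_(a < n) \sum_(b < n) A a b * G a b.
Definition cv (C : numClosedFieldType) n (x : vec C n) : vec C n := fun i => (x i)^*.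

Lemma omN (C : numClosedFieldType) n (z w : vec C n) a b : om z w a b = - om z w b a.
Proof. rewrite /om; ring. Qed.

Lemma s132 (C : numClosedFieldType) n (F : 'I_n -> 'I_n -> 'I_n -> C) :
  \sum_(p < n) \sum_(q < n) \sum_(r < n) F p q r = \sum_(p < n) \sum_(r < n) \sum_(q < n) F p q r.
Proof. apply: eq_bigr => p _; exact: exchange_big. Qed.
Lemma s213 (C : numClosedFieldType) n (F : 'I_n -> 'I_n -> 'I_n -> C) :
  \sum_(p < n) \sum_(q < n) \sum_(r < n) F p q r = \sum_(q < n) \sum_(p < n) \sum_(r < n) F p q r.
Proof. exact: exchange_big. Qed.
Lemma s312 (C : numClosedFieldType) n (F : 'I_n -> 'I_n -> 'I_n -> C) :
  \sum_(p < n) \sum_(q < n) \sum_(r < n) F p q r = \sum_(r < n) \sum_(p < n) \sum_(q < n) F p q r.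
Proof. by rewrite s132 exchange_big. Qed.
Lemma s231 (C : numClosedFieldType) n (F : 'I_n -> 'I_n -> 'I_n -> C) :
  \sum_(p < n) \sum_(q < n) \sum_(r < n) F p q r = \sum_(q < n) \sum_(r < n) \sum_(p < n) F p q r.
Proof. by rewrite s213; apply: eq_bigr => q _; rewrite exchange_big. Qed.

Lemma Zswap (C : numClosedFieldType) n (A G : Defs.form C n) :
  (forall i j, A i j = A j i) ->
  \sum_(p < n) \sum_(q < n) A p q * G q p = Zf A G.
Proof.
move=> hA; rewrite /Zf exchange_big; apply: eq_bigr => a _; apply: eq_bigr => b _.
by rewrite hA.
Qed.

Lemma Zsym (C : numClosedFieldType) n (A G : Defs.form C n) :
  (forall i j, A i j = A j i) ->
  \sum_(p < n) \sum_(q < n) A q p * G p q = Zf A G.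
Proof.
move=> hA; rewrite /Zf; apply: eq_bigr => a _; apply: eq_bigr => b _.
by rewrite hA.
Qed.

Lemma sumN2 (C : numClosedFieldType) n (F : 'I_n -> 'I_n -> C) :
  \sum_(p < n) \sum_(q < n) - F p q = - \sum_(p < n) \sum_(q < n) F p q.
Proof. rewrite -sumrN; apply: eq_bigr => p _; by rewrite sumrN. Qed.


Lemma sum3N (C : numClosedFieldType) n (F : 'I_n -> 'I_n -> 'I_n -> C) :
  \sum_(p < n) \sum_(q < n) \sum_(r < n) - F p q r = - \sum_(p < n) \sum_(q < n) \sum_(r < n) F p q r.
Proof. rewrite -sumrN; apply: eq_bigr => p _; by rewrite sumN2. Qed.

Lemma sum3D (C : numClosedFieldType) n (F G : 'I_n -> 'I_n -> 'I_n -> C) :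
  \sum_(p < n) \sum_(q < n) \sum_(r < n) (F p q r + G p q r) =
  \sum_(p < n) \sum_(q < n) \sum_(r < n) F p q r + \sum_(p < n) \sum_(q < n) \sum_(r < n) G p q r.
Proof. do 3 (rewrite -big_split /=; apply: eq_bigr => ? _). done. Qed.

Definition tr' (C : numClosedFieldType) n (A : Defs.form C n) : C := \sum_(i < n) A i i.
Definition Wm (C : numClosedFieldType) n (z w : vec C n) : C :=
  \sum_(q < n) \sum_(r < n) om z w q r * (om z w q r)^*.

Lemma S11 (C : numClosedFieldType) n (A : Defs.form C n) z w :
  \sum_(p < n) \sum_(q < n) \sum_(r < n) (om z w q r * (om z w q r)^* * A p p) = tr' A * Wm z w.
Proof.
rewrite /tr' /Wm mulr_suml; apply: eq_bigr => p _; rewrite mulrC mulr_suml.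
apply: eq_bigr => q _; rewrite mulr_suml; apply: eq_bigr => r _; ring.
Qed.

Lemma S22 (C : numClosedFieldType) n (A : Defs.form C n) z w :
  \sum_(p < n) \sum_(q < n) \sum_(r < n) (om z w p r * (om z w p r)^* * A q q) = tr' A * Wm z w.
Proof. by rewrite s213 S11. Qed.

Lemma S33 (C : numClosedFieldType) n (A : Defs.form C n) z w :
  \sum_(p < n) \sum_(q < n) \sum_(r < n) (om z w p q * (om z w p q)^* * A r r) = tr' A * Wm z w.
Proof. by rewrite s312 S11. Qed.

Lemma S12 (C : numClosedFieldType) n (A : Defs.form C n) z w :
  (forall i j, A i j = A j i) ->
  \sum_(p < n) \sum_(q < n) \sum_(r < n) (- (om z w q r * (om z w p r)^* * A p q)) = - Zf A (Pm z w).
Proof.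
move=> hA; rewrite sum3N -(Zswap _ hA); congr (- _).
apply: eq_bigr => p _; apply: eq_bigr => q _; rewrite /Pm mulr_sumr.
apply: eq_bigr => r _; ring.
Qed.

Lemma S21 (C : numClosedFieldType) n (A : Defs.form C n) z w :
  (forall i j, A i j = A j i) ->
  \sum_(p < n) \sum_(q < n) \sum_(r < n) (- (om z w p r * (om z w q r)^* * A q p)) = - Zf A (Pm z w).
Proof.
move=> hA; rewrite sum3N -(Zsym _ hA); congr (- _).
apply: eq_bigr => p _; apply: eq_bigr => q _; rewrite /Pm mulr_sumr.
apply: eq_bigr => r _; ring.
Qed.

Lemma S13 (C : numClosedFieldType) n (A : Defs.form C n) z w :
  (forall i j, A i j = A j i) ->
  \sum_(p < n) \sum_(q < n) \sum_(r < n) (om z w q r * (om z w p q)^* * A p r) = - Zf A (Pm z w).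
Proof.
move=> hA; rewrite s132 -(Zswap _ hA) -sumN2.
apply: eq_bigr => p _; apply: eq_bigr => r _; rewrite /Pm mulr_sumr -sumrN.
apply: eq_bigr => q _; rewrite (omN z w q r); ring.
Qed.

Lemma S31 (C : numClosedFieldType) n (A : Defs.form C n) z w :
  (forall i j, A i j = A j i) ->
  \sum_(p < n) \sum_(q < n) \sum_(r < n) (om z w p q * (om z w q r)^* * A r p) = - Zf A (Pm z w).
Proof.
move=> hA; rewrite s132 -(Zsym _ hA) -sumN2.
apply: eq_bigr => p _; apply: eq_bigr => r _; rewrite /Pm mulr_sumr -sumrN.
apply: eq_bigr => q _; rewrite (omN z w q r) rmorphN; ring.
Qed.

Lemma S23 (C : numClosedFieldType) n (A : Defs.form C n) z w :
  (forall i j, A i j = A j i) ->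
  \sum_(p < n) \sum_(q < n) \sum_(r < n) (- (om z w p r * (om z w p q)^* * A q r)) = - Zf A (Pm z w).
Proof.
move=> hA; rewrite sum3N s231 -(Zswap _ hA); congr (- _).
apply: eq_bigr => q _; apply: eq_bigr => r _; rewrite /Pm mulr_sumr.
apply: eq_bigr => p _; rewrite (omN z w p r) (omN z w p q) rmorphN; ring.
Qed.

Lemma S32 (C : numClosedFieldType) n (A : Defs.form C n) z w :
  (forall i j, A i j = A j i) ->
  \sum_(p < n) \sum_(q < n) \sum_(r < n) (- (om z w p q * (om z w p r)^* * A r q)) = - Zf A (Pm z w).
Proof.
move=> hA; rewrite sum3N s231 -(Zsym _ hA); congr (- _).
apply: eq_bigr => q _; apply: eq_bigr => r _; rewrite /Pm mulr_sumr.
apply: eq_bigr => p _; rewrite (omN z w p r) (omN z w p q) rmorphN; ring.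
Qed.

Lemma bil_lin3l (C : numClosedFieldType) n (A : Defs.form C n) (x e1 e2 e3 y : vec C n) c1 c2 c3 :
  (forall i, x i = c1 * e1 i + c2 * e2 i + c3 * e3 i) ->
  bil A x y = c1 * bil A e1 y + c2 * bil A e2 y + c3 * bil A e3 y.
Proof.
move=> hx.
rewrite (@bil_linl _ _ A x (fun i => c1 * e1 i + c2 * e2 i) e3 y 1 c3); last first.
  by move=> i; rewrite hx mul1r.
rewrite (@bil_linl _ _ A (fun i => c1 * e1 i + c2 * e2 i) e1 e2 y c1 c2) //; ring.
Qed.

Lemma bil_lin3r (C : numClosedFieldType) n (A : Defs.form C n) (x e1 e2 e3 y : vec C n) c1 c2 c3 :
  (forall i, y i = c1 * e1 i + c2 * e2 i + c3 * e3 i) ->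
  bil A x y = c1 * bil A x e1 + c2 * bil A x e2 + c3 * bil A x e3.
Proof.
move=> hx.
rewrite (@bil_linr _ _ A x y (fun i => c1 * e1 i + c2 * e2 i) e3 1 c3); last first.
  by move=> i; rewrite hx mul1r.
rewrite (@bil_linr _ _ A x (fun i => c1 * e1 i + c2 * e2 i) e1 e2 c1 c2) //; ring.
Qed.

Definition uu (C : numClosedFieldType) n (z w : vec C n) (p q r : 'I_n) : vec C n :=
  fun a => om z w q r * @ev C n p a + (- om z w p r) * @ev C n q a + om z w p q * @ev C n r a.

Lemma ev_conj (C : numClosedFieldType) n (p a : 'I_n) : (@ev C n p a)^* = @ev C n p a.
Proof. by rewrite /ev /idf rmorph_nat. Qed.

Lemma bil_uu (C : numClosedFieldType) n (A : Defs.form C n) z w p q r :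
  bil A (uu z w p q r) (cv (uu z w p q r)) =
    om z w q r * (om z w q r)^* * A p p
  + - (om z w q r * (om z w p r)^* * A p q)
  + om z w q r * (om z w p q)^* * A p r
  + - (om z w p r * (om z w q r)^* * A q p)
  + om z w p r * (om z w p r)^* * A q q
  + - (om z w p r * (om z w p q)^* * A q r)
  + om z w p q * (om z w q r)^* * A r p
  + - (om z w p q * (om z w p r)^* * A r q)
  + om z w p q * (om z w p q)^* * A r r.
Proof.
rewrite (@bil_lin3l _ _ A _ (@ev C n p) (@ev C n q) (@ev C n r) _
   (om z w q r) (- om z w p r) (om z w p q)) //.
have hy : forall i, cv (uu z w p q r) i = (om z w q r)^* * @ev C n p i
   + (- om z w p r)^* * @ev C n q i + (om z w p q)^* * @ev C n r i.
  move=> i; rewrite /cv /uu; move: (om z w q r) (om z w p r) (om z w p q) => a1 a2 a3.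
  by rewrite !rmorphD !rmorphM /ev /idf !rmorph_nat.
rewrite !(bil_lin3r _ _ hy) !bil_ev rmorphN; ring.
Qed.

Lemma sum_uu (C : numClosedFieldType) n (A : Defs.form C n) z w :
  (forall i j, A i j = A j i) ->
  \sum_(p < n) \sum_(q < n) \sum_(r < n) bil A (uu z w p q r) (cv (uu z w p q r)) =
  3 * tr' A * Wm z w - 6 * Zf A (Pm z w).
Proof.
move=> hA.
have -> : \sum_(p < n) \sum_(q < n) \sum_(r < n) bil A (uu z w p q r) (cv (uu z w p q r)) =
  \sum_(p < n) \sum_(q < n) \sum_(r < n) (
    om z w q r * (om z w q r)^* * A p p
  + - (om z w q r * (om z w p r)^* * A p q)
  + om z w q r * (om z w p q)^* * A p r
  + - (om z w p r * (om z w q r)^* * A q p)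
  + om z w p r * (om z w p r)^* * A q q
  + - (om z w p r * (om z w p q)^* * A q r)
  + om z w p q * (om z w q r)^* * A r p
  + - (om z w p q * (om z w p r)^* * A r q)
  + om z w p q * (om z w p q)^* * A r r).
  by do 3 (apply: eq_bigr => ? _); rewrite bil_uu.
rewrite !sum3D S11 S22 S33 (S12 _ _ hA) (S13 _ _ hA) (S21 _ _ hA) (S23 _ _ hA)
  (S31 _ _ hA) (S32 _ _ hA).
ring.
Qed.

Definition Dt (C : numClosedFieldType) n (x y : vec C n) : C := \sum_(j < n) x j * y j.

Lemma bil_idf (C : numClosedFieldType) n (x y : vec C n) : bil (@idf C n) x y = Dt x y.
Proof.
rewrite /bil /Dt; apply: eq_bigr => i _.
rewrite -(sum_delta i (fun j => x i * y j)); apply: eq_bigr => j _.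
rewrite idfC; ring.
Qed.

Lemma sum2_lin (C : numClosedFieldType) n (f1 f2 f3 f4 : 'I_n -> 'I_n -> C) :
  \sum_(i < n) \sum_(j < n) (f1 i j - f2 i j - f3 i j + f4 i j) =
  \sum_(i < n) \sum_(j < n) f1 i j - \sum_(i < n) \sum_(j < n) f2 i j
  - \sum_(i < n) \sum_(j < n) f3 i j + \sum_(i < n) \sum_(j < n) f4 i j.
Proof. do 2 (rewrite -!sumrB -big_split /=; apply: eq_bigr => ? _). done. Qed.

Lemma sum_bilK (C : numClosedFieldType) n (A : Defs.form C n) (x y : vec C n) K :
  \sum_(a < n) \sum_(b < n) A a b * (x a * y b * K) = bil A x y * K.
Proof.
rewrite /bil mulr_suml; apply: eq_bigr => a _; rewrite mulr_suml.
apply: eq_bigr => b _; ring.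
Qed.

Lemma Pm_exp (C : numClosedFieldType) n (z w : vec C n) a b :
  Pm z w a b = z a * (z b)^* * Dt w (cv w) - z a * (w b)^* * Dt w (cv z)
     - w a * (z b)^* * Dt z (cv w) + w a * (w b)^* * Dt z (cv z).
Proof.
rewrite /Pm /Dt /cv !mulr_sumr -!sumrB -big_split /=; apply: eq_bigr => j _.
rewrite /om rmorphB !rmorphM; ring.
Qed.

Lemma Q4_odot_id (C : numClosedFieldType) n (A : Defs.form C n) (z w : vec C n) :
  Q4 (odot A (@idf C n)) z w (cv z) (cv w) = Zf A (Pm z w).
Proof.
rewrite Q4_odot !bil_idf /Zf.
under eq_bigr => a _ do under eq_bigr => b _ do rewrite Pm_exp mulrDr !mulrBr.
rewrite sum2_lin !sum_bilK; ring.
Qed.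

Lemma psd_complex (C : numClosedFieldType) n (M : Defs.form C n) (u : vec C n) :
  (forall i j, M i j = M j i) -> psd M -> 0 <= bil M u (cv u).
Proof.
move=> hM hp.
pose al : vec C n := fun i => 'Re (u i).
pose be : vec C n := fun i => 'Im (u i).
have hu : forall i, u i = 1 * al i + 'i * be i by move=> i; rewrite mul1r -Crect.
have hc : forall i, cv u i = 1 * al i + (- 'i) * be i.
  move=> i; rewrite /cv {1}(Crect (u i)) conjC_rect ?Creal_Re ?Creal_Im //.
  by rewrite mul1r mulNr.
rewrite (bil_linl _ _ hu) !(bil_linr _ _ hc) (bil_sym be al hM).
have -> : 1 * (1 * bil M al al + - 'i * bil M al be) + 'i * (1 * bil M al be + - 'i * bil M be be)
   = bil M al al + bil M be be - (1 + 'i * 'i) * bil M be be by ring.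
rewrite mulCii addrN mul0r subr0.
apply: addr_ge0; apply: hp => i; [exact: Creal_Re | exact: Creal_Im].
Qed.

Lemma Q4_add (C : numClosedFieldType) n (R S T : tensor4 C n) a b c d :
  (forall i j k l, R i j k l = S i j k l + T i j k l) ->
  Q4 R a b c d = Q4 S a b c d + Q4 T a b c d.
Proof.
move=> hR; rewrite /Q4; do 4 (rewrite -big_split /=; apply: eq_bigr => ? _).
rewrite hR; ring.
Qed.

Lemma Zf_M (C : numClosedFieldType) n (t c : C) (H G : Defs.form C n) :
  Zf (fun i j => t * @idf C n i j - c * H i j) G =
  t * \sum_(a < n) G a a - c * Zf H G.
Proof.
rewrite /Zf mulr_sumr mulr_sumr -sumrB; apply: eq_bigr => a _.
rewrite -(sum_delta a (fun b => t * G a b)) mulr_sumr -sumrB; apply: eq_bigr => b _.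
rewrite idfC; ring.
Qed.

Lemma tr_M (C : numClosedFieldType) n (t c : C) (H : Defs.form C n) :
  tr' (fun i j => t * @idf C n i j - c * H i j) = t * n%:R - c * tr H.
Proof.
rewrite /tr' /tr sumrB -!mulr_sumr.
have -> : \sum_(i < n) @idf C n i i = n%:R.
  under eq_bigr => i _ do rewrite /idf eqxx.
  by rewrite sumr_const card_ord.
by [].
Qed.

Lemma part1 (C : numClosedFieldType) n (R S : tensor4 C n) (H : Defs.form C n) :
  (2 < n)%N -> PIC2 S -> sym_form H ->
  psd (fun i j => tr H * @idf C n i j - (n%:R - 2 * 1) * H i j) ->
  (forall i j k l, R i j k l = S i j k l + odot H (@idf C n) i j k l) ->
  PIC2 R.
Proof.
move=> hn hS [_ hHs] hM hR z w.
have := Q4_add z w (cv z) (cv w) hR; rewrite /Q4 /cv => ->.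
apply: addr_ge0; first exact: hS.
have -> : \sum_(i < n) \sum_(j < n) \sum_(k < n) \sum_(l < n)
    odot H (@idf C n) i j k l * z i * w j * (z k)^* * (w l)^* = Zf H (Pm z w).
  by rewrite -Q4_odot_id.
set M := (fun i j => tr H * @idf C n i j - (n%:R - 2 * 1) * H i j).
have hMs : forall i j, M i j = M j i by move=> i j; rewrite /M idfC hHs.
have hpos : 0 <= \sum_(p < n) \sum_(q < n) \sum_(r < n) bil M (uu z w p q r) (cv (uu z w p q r)).
  do 3 (apply: sumr_ge0 => ? _); exact: psd_complex.
rewrite sum_uu // /M tr_M Zf_M in hpos.
have hW : \sum_(a < n) Pm z w a a = Wm z w by [].
rewrite hW in hpos.
have e : 3 * (tr H * n%:R - (n%:R - 2 * 1) * tr H) * Wm z w -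
        6 * (tr H * Wm z w - (n%:R - 2 * 1) * Zf H (Pm z w)) =
        (6 * (n%:R - 2)) * Zf H (Pm z w) by ring.
rewrite e in hpos.
have hn2 : (0 : C) < 6 * (n%:R - 2).
  apply: mulr_gt0; first by rewrite ltr0n.
  by rewrite subr_gt0 ltr_nat.
by rewrite pmulr_rge0 in hpos.
Qed.

Lemma bil_quad (C : numClosedFieldType) n (M : Defs.form C n) (u y : vec C n) t :
  (forall i j, M i j = M j i) ->
  bil M (fun i => u i + t * y i) (fun i => u i + t * y i) =
  bil M u u + 2 * t * bil M u y + t ^+ 2 * bil M y y.
Proof.
move=> hs.
have hx : forall i, (fun i => u i + t * y i) i = 1 * u i + t * y i by move=> i; rewrite mul1r.
rewrite (bil_linl _ _ hx) !(bil_linr _ _ hx) (bil_sym y u hs); ring.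
Qed.

Lemma psd_null (C : numClosedFieldType) n (M : Defs.form C n) (u : vec C n) :
  (forall i j, M i j = M j i) -> psd M -> real_vec u -> bil M u u = 0 ->
  forall y, real_vec y -> bil M u y = 0.
Proof.
move=> hs hp hu h0 y hy.
have hc : 0 <= bil M y y := hp y hy.
have e1 := bil_quad u y 1 hs.
have hr1 : real_vec (fun i => u i + 1 * y i).
  by move=> i; apply: rpredD; [exact: hu | apply: rpredM; [exact: rpred1 | exact: hy]].
have h1 : 0 <= bil M (fun i => u i + 1 * y i) (fun i => u i + 1 * y i) := hp _ hr1.
rewrite e1 h0 in h1.
have hb : bil M u y \is Num.real.
  have h2 : 2 * bil M u y \is Num.real.
    have -> : 2 * bil M u y = (0 + 2 * 1 * bil M u y + 1 ^+ 2 * bil M y y) - bil M y y by ring.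
    by rewrite rpredB ?ger0_real.
  have -> : bil M u y = 2^-1 * (2 * bil M u y) by rewrite mulrA mulVf ?mul1r ?pnatr_eq0.
  by rewrite rpredM ?rpredV ?realn.
set b := bil M u y in hb *; set c := bil M y y in hc *.
have hc1 : c + 1 != 0 by rewrite gt_eqF // ltr_wpDl.
pose t := - b / (c + 1).
have ht : t \is Num.real.
  rewrite /t; apply: rpredM; first by rewrite rpredN.
  by rewrite rpredV; apply: rpredD; [exact: ger0_real | exact: rpred1].
have hrt : real_vec (fun i => u i + t * y i).
  by move=> i; apply: rpredD; [exact: hu | apply: rpredM; [exact: ht | exact: hy]].
have h3 : 0 <= bil M (fun i => u i + t * y i) (fun i => u i + t * y i) := hp _ hrt.
rewrite (bil_quad u y t hs) h0 -/b -/c in h3.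
have e : (c + 1) ^+ 2 * (0 + 2 * t * b + t ^+ 2 * c) = - (b ^+ 2 * (c + 2)).
  rewrite /t; field; exact: hc1.
have h4 : 0 <= - (b ^+ 2 * (c + 2)).
  rewrite -e; apply: mulr_ge0 => //; apply: exprn_ge0; exact: addr_ge0.
have h5 : 0 <= b ^+ 2 * (c + 2).
  apply: mulr_ge0; first by rewrite -realEsqr.
  exact: addr_ge0.
have h6 : b ^+ 2 * (c + 2) = 0.
  apply/eqP; rewrite eq_le h5 andbT -oppr_ge0; exact: h4.
move/eqP: h6; rewrite mulf_eq0 sqrf_eq0 => /orP [/eqP //|].
by rewrite gt_eqF // ltr_wpDl.
Qed.

Lemma ev_real (C : numClosedFieldType) n (p : 'I_n) : real_vec (@ev C n p).
Proof. by move=> i; rewrite /ev /idf realn. Qed.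

Lemma bil_pair (C : numClosedFieldType) n (A : Defs.form C n) j l (s : C) :
  bil A (fun i => 1 * @ev C n j i + s * @ev C n l i) (fun i => 1 * @ev C n j i + s * @ev C n l i)
  = A j j + s * (A j l + A l j) + s ^+ 2 * A l l.
Proof.
have hx : forall i, (fun i => 1 * @ev C n j i + s * @ev C n l i) i = 1 * @ev C n j i + s * @ev C n l i by [].
rewrite (bil_linl _ _ hx) !(bil_linr _ _ hx) !bil_ev; ring.
Qed.

Lemma form_zero (C : numClosedFieldType) n (A : Defs.form C n) :
  (forall y, real_vec y -> 0 <= bil A y y) -> (forall j, A j j = 0) ->
  forall j l, A j l + A l j = 0.
Proof.
move=> hp hd j l.
have hr : forall s : C, s \is Num.real -> real_vec (fun i => 1 * @ev C n j i + s * @ev C n l i).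
  move=> s hs i; have h1 := @ev_real C n j i; have h2 := @ev_real C n l i.
  by apply: rpredD; apply: rpredM => //; exact: rpred1.
have h1 := hp _ (hr 1 (realn C 1)); rewrite bil_pair !hd in h1.
have hm1 : (-1 : C) \is Num.real by rewrite realN (realn C 1).
have h2 := hp _ (hr (-1) hm1); rewrite bil_pair !hd in h2.
have e1 : 0 + 1 * (A j l + A l j) + 1 ^+ 2 * 0 = A j l + A l j by ring.
have e2 : 0 + -1 * (A j l + A l j) + (-1) ^+ 2 * 0 = - (A j l + A l j) by ring.
rewrite e1 in h1; rewrite e2 oppr_ge0 in h2.
by apply/eqP; rewrite eq_le h1 h2.
Qed.

Lemma Q4_real (C : numClosedFieldType) n (S : tensor4 C n) (x y : vec C n) :
  PIC2 S -> real_vec x -> real_vec y -> 0 <= Q4 S x y x y.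
Proof.
move=> hS hx hy; have h := hS x y.
have e : \sum_(i < n) \sum_(j < n) \sum_(k < n) \sum_(l < n)
   S i j k l * x i * y j * (x k)^* * (y l)^* = Q4 S x y x y.
  by rewrite /Q4; do 4 (apply: eq_bigr => ? _); rewrite !conj_Creal.
by rewrite -e.
Qed.

Definition Ax (C : numClosedFieldType) n (S : tensor4 C n) (x : vec C n) : Defs.form C n :=
  fun j l => \sum_(i < n) \sum_(k < n) S i j k l * x i * x k.

Lemma Q4_Ax (C : numClosedFieldType) n (S : tensor4 C n) (x y : vec C n) :
  Q4 S x y x y = bil (Ax S x) y y.
Proof.
rewrite /Q4 /bil [LHS]exchange_big; apply: eq_bigr => j _; rewrite s312.
apply: eq_bigr => l _; rewrite /Ax mulr_sumr mulr_suml; apply: eq_bigr => i _.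
rewrite mulr_sumr mulr_suml; apply: eq_bigr => k _; ring.
Qed.

Lemma Ax_sym (C : numClosedFieldType) n (S : tensor4 C n) (x : vec C n) :
  is_ACT S -> forall j l, Ax S x j l = Ax S x l j.
Proof.
move=> [_ [_ [hp _]]] j l.
rewrite /Ax [RHS]exchange_big; apply: eq_bigr => a _; apply: eq_bigr => b _.
rewrite hp; ring.
Qed.

Lemma Ax_trace (C : numClosedFieldType) n (S : tensor4 C n) (x : vec C n) :
  \sum_(j < n) Ax S x j j = bil (Ric S) x x.
Proof.
rewrite /Ax /bil /Ric s231; apply: eq_bigr => i _; apply: eq_bigr => k _.
rewrite mulr_sumr mulr_suml; apply: eq_bigr => j _; ring.
Qed.

Lemma S_zero (C : numClosedFieldType) n (S : tensor4 C n) :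
  is_ACT S -> PIC2 S -> (forall i k, Ric S i k = 0) -> forall i j k l, S i j k l = 0.
Proof.
move=> hA hP hR.
have hpos : forall x, real_vec x -> forall y, real_vec y -> 0 <= bil (Ax S x) y y.
  by move=> x hx y hy; rewrite -Q4_Ax; exact: Q4_real.
have hdiag : forall x, real_vec x -> forall j, Ax S x j j = 0.
  move=> x hx j.
  have hs : \sum_(j < n) Ax S x j j = 0.
    by rewrite Ax_trace /bil big1 // => i _; rewrite big1 // => k _; rewrite hR mulr0 mul0r.
  apply: (psumr_eq0P _ hs) => // j' _.
  by rewrite -(bil_ev (Ax S x)); apply: hpos => //; exact: ev_real.
have hAx : forall x, real_vec x -> forall j l, Ax S x j l = 0.
  move=> x hx j l; have := form_zero (hpos x hx) (hdiag x hx) j l.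
  rewrite (Ax_sym x hA l j) => /eqP; rewrite -mulr2n -mulr_natl mulf_eq0 pnatr_eq0 /=.
  by move/eqP.
have hsw : forall i j k l, S i j k l + S k j i l = 0.
  move=> i j k l.
  pose F : Defs.form C n := fun a b => S a j b l.
  have hF : forall x, real_vec x -> bil F x x = 0.
    move=> x hx; rewrite -(hAx x hx j l) /bil /Ax; apply: eq_bigr => a _; apply: eq_bigr => b _.
    rewrite /F; ring.
  apply: (@form_zero C n F) => [y hy|a]; first by rewrite hF.
  by rewrite -(bil_ev F) hF //; exact: ev_real.
move: hA => [_ [hanti [hpair hbi]]] i j k l.
have h1 := hsw i j k l.
have h2 : S j k i l = - S k j i l by rewrite hanti.
have h3 := hsw k i j l.
have h4 : S j i k l = - S i j k l by rewrite hanti.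
have h5 := hbi i j k l.
have : 3 * S i j k l = 0.
  have -> : 3 * S i j k l = S i j k l + S j k i l + S k i j l
     - S j k i l - S k i j l + 2 * S i j k l by ring.
  rewrite h5 h2.
  have -> : S k i j l = - S j i k l by apply/eqP; rewrite -addr_eq0 h3.
  rewrite h4.
  have -> : S k j i l = - S i j k l by apply/eqP; rewrite -addr_eq0 addrC h1.
  ring.
by move/eqP; rewrite mulf_eq0 pnatr_eq0 /= => /eqP.
Qed.

Lemma Ric_odot_id (C : numClosedFieldType) n (A : Defs.form C n) i k :
  Ric (odot A (@idf C n)) i k = (n%:R - 2) * A i k + tr A * @idf C n i k.
Proof.
rewrite /Ric /odot /tr.
rewrite (_ : \sum_(j < n) _ = \sum_(j < n) (A i k * @idf C n j j) - \sum_(j < n) (A i j * @idf C n j k)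
   - \sum_(j < n) (@idf C n j i * A j k) + \sum_(j < n) (A j j * @idf C n i k)); last first.
  rewrite -!sumrB -big_split /=; apply: eq_bigr => j _; rewrite (@idfC C n i j); ring.
rewrite sum_delta_r sum_delta -mulr_sumr -mulr_suml.
have -> : \sum_(i < n) @idf C n i i = n%:R.
  under eq_bigr => j _ do rewrite /idf eqxx.
  by rewrite sumr_const card_ord.
ring.
Qed.

Lemma Ric_add (C : numClosedFieldType) n (R S T : tensor4 C n) :
  (forall i j k l, R i j k l = S i j k l + T i j k l) ->
  forall i k, Ric R i k = Ric S i k + Ric T i k.
Proof. move=> h i k; rewrite /Ric -big_split; apply: eq_bigr => j _; exact: h. Qed.

Lemma bil_formlin (C : numClosedFieldType) n (A X Y : Defs.form C n) (x y : vec C n) a b :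
  (forall i k, A i k = a * X i k + b * Y i k) ->
  bil A x y = a * bil X x y + b * bil Y x y.
Proof.
move=> h; rewrite /bil !mulr_sumr -big_split; apply: eq_bigr => i _.
rewrite !mulr_sumr -big_split; apply: eq_bigr => j _; rewrite h /=; ring.
Qed.

Lemma Ax_ev (C : numClosedFieldType) n (S : tensor4 C n) i j l :
  Ax S (@ev C n i) j l = S i j i l.
Proof.
rewrite /Ax /ev; under eq_bigr => a _ do rewrite sum_delta_r.
by rewrite sum_delta_r.
Qed.

Lemma scal_ge0 (C : numClosedFieldType) n (S : tensor4 C n) : PIC2 S -> 0 <= scal S.
Proof.
move=> hS; rewrite /scal /Ric; apply: sumr_ge0 => i _; apply: sumr_ge0 => j _.
rewrite -Ax_ev -(bil_ev (Ax S (@ev C n i))) -Q4_Ax; apply: Q4_real => //; exact: ev_real.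
Qed.

Definition wv (C : numClosedFieldType) n (v : vec C n) (p q : 'I_n) : vec C n :=
  fun a => v q * @ev C n p a + (- v p) * @ev C n q a.

Lemma bil_wv_l (C : numClosedFieldType) n (M : Defs.form C n) (v y : vec C n) p q :
  bil M (wv v p q) y = v q * bil M (@ev C n p) y + (- v p) * bil M (@ev C n q) y.
Proof. exact: bil_linl. Qed.

Lemma sum_wv (C : numClosedFieldType) n (M : Defs.form C n) (v : vec C n) :
  (forall i j, M i j = M j i) ->
  \sum_(p < n) \sum_(q < n) bil M (wv v p q) (wv v p q) = 2 * (tr' M * Dt v v - bil M v v).
Proof.
move=> hs.
have e : \sum_(p < n) \sum_(q < n) bil M (wv v p q) (wv v p q) =
  \sum_(p < n) \sum_(q < n) (v q * v q * M p p - v q * v p * M p q - v p * v q * M q p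
      + v p * v p * M q q).
  apply: eq_bigr => p _; apply: eq_bigr => q _.
  rewrite bil_wv_l !(@bil_linr _ _ M _ (wv v p q) (@ev C n p) (@ev C n q) (v q) (- v p)) //.
  rewrite !bil_ev; ring.
rewrite e sum2_lin.
have e1 : \sum_(p < n) \sum_(q < n) (v q * v q * M p p) = tr' M * Dt v v.
  rewrite /tr' /Dt mulr_suml; apply: eq_bigr => p _; rewrite mulr_sumr; apply: eq_bigr => q _; ring.
have e2 : \sum_(p < n) \sum_(q < n) (v q * v p * M p q) = bil M v v.
  rewrite /bil; apply: eq_bigr => p _; apply: eq_bigr => q _; ring.
have e3 : \sum_(p < n) \sum_(q < n) (v p * v q * M q p) = bil M v v.
  rewrite /bil exchange_big; apply: eq_bigr => p _; apply: eq_bigr => q _; ring.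
have e4 : \sum_(p < n) \sum_(q < n) (v p * v p * M q q) = tr' M * Dt v v.
  rewrite /tr' /Dt mulrC mulr_suml; apply: eq_bigr => p _; rewrite mulr_sumr; apply: eq_bigr => q _; ring.
rewrite e1 e2 e3 e4; ring.
Qed.

Unset Implicit Arguments.

Theorem proposition2p3 (C : numClosedFieldType) (n : nat) (R : tensor4 C n) :
  (5 <= n)%N ->
  cone_C 1 0 R ->
  PIC2 R /\
  (forall v : vec C n,
     real_vec v ->
     \sum_(i < n) v i * v i = 1 ->
     \sum_(i < n) \sum_(k < n) Ric R i k * v i * v k = 0 ->
     exists c : C, 0 <= c /\
       forall i j k l,
         R i j k l = c * odot (fun a b : 'I_n => @idf C n a b - 2 * v a * v b) (@idf C n) i j k l).
Proof.
move=> hn [_ [S [H [hSact [hSP [hRic0 [[hHr hHs] [hM [htr hR]]]]]]]]].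
have hn2 : (2 < n)%N by apply: leq_trans hn.
split; first exact: (part1 hn2 hSP (conj hHr hHs) hM hR).
move=> v hv hv1 hric.
set M := fun i j => tr H * @idf C n i j - (n%:R - 2 * 1) * H i j.
have hMs : forall i j, M i j = M j i by move=> i j; rewrite /M idfC hHs.
have hDt : Dt v v = 1 := hv1.
have hn0 : (n%:R - 2 : C) != 0 by rewrite gt_eqF // subr_gt0 ltr_nat.
have hnpos : (0 : C) < n%:R - 2 by rewrite subr_gt0 ltr_nat.
have hRicS : forall i k, Ric S i k = n%:R^-1 * scal S * @idf C n i k.
  by move=> i k; apply/subr0_eq; exact: hRic0.
have hRicR : forall i k, Ric R i k =
    (n%:R^-1 * scal S + tr H) * @idf C n i k + (n%:R - 2) * H i k.
  by move=> i k; rewrite (Ric_add hR) hRicS Ric_odot_id; ring.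
have hq : bil (Ric R) v v = 0.
  rewrite -hric /bil; apply: eq_bigr => i _; apply: eq_bigr => k _; ring.
rewrite (bil_formlin _ _ hRicR) bil_idf hDt in hq.
have hMl : forall i k, M i k = tr H * @idf C n i k + (- (n%:R - 2 * 1)) * H i k.
  by move=> i k; rewrite /M; ring.
have hm : bil M v v = tr H - (n%:R - 2) * bil H v v.
  rewrite (bil_formlin _ _ hMl) bil_idf hDt; ring.
have htrM : tr' M = 2 * tr H by rewrite /M tr_M; ring.
have hwsum := sum_wv v hMs; rewrite htrM hDt in hwsum.
have hwr : forall p q, real_vec (wv v p q).
  move=> p q a; have h1 := @ev_real C n p a; have h2 := @ev_real C n q a.
  by apply: rpredD; apply: rpredM => //; rewrite ?rpredN hv.
have hwpos : forall p q, 0 <= bil M (wv v p q) (wv v p q) by move=> p q; exact: hM.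
have hscal := scal_ge0 hSP.
have key : n%:R^-1 * scal S + (2 * tr H - bil M v v) = 0.
  by rewrite hm -[RHS]hq; ring.
have hX : 0 <= 2 * tr H - bil M v v.
  have : 0 <= \sum_(p < n) \sum_(q < n) bil M (wv v p q) (wv v p q).
    by do 2 (apply: sumr_ge0 => ? _).
  by rewrite hwsum mulr1 pmulr_rge0.
have hsc0 : 0 <= n%:R^-1 * scal S by rewrite mulr_ge0 // invr_ge0 ler0n.
move/eqP: key; rewrite paddr_eq0 // => /andP [/eqP hs0 /eqP hm0].
have hscal0 : scal S = 0.
  move/eqP: hs0; rewrite mulf_eq0 invr_eq0 pnatr_eq0 => /orP [/eqP hn00|/eqP //].
  by rewrite hn00 in hn.
have hS0 : forall i j k l, S i j k l = 0.
  apply: S_zero => // i k; by rewrite hRicS hscal0 mulr0 mul0r.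
have hm2 : bil M v v = 2 * tr H by apply/eqP; rewrite eq_sym -subr_eq0 hm0.
rewrite mulr1 hm0 mulr0 in hwsum.
have hw0 : forall p q, bil M (wv v p q) (wv v p q) = 0.
  move=> p q.
  have hp0 : \sum_(q < n) bil M (wv v p q) (wv v p q) = 0.
    by apply: (psumr_eq0P _ hwsum) => // p' _; apply: sumr_ge0.
  exact: (psumr_eq0P _ hp0).
have hnull : forall p q k, v q * M p k = v p * M q k.
  move=> p q k.
  have := psd_null hMs hM (hwr p q) (hw0 p q) (@ev_real C n k).
  by rewrite bil_wv_l !bil_ev mulNr => /eqP; rewrite subr_eq0 => /eqP.
pose g k := \sum_(q < n) v q * M q k.
have step1 : forall p k, M p k = v p * g k.
  move=> p k; rewrite -[LHS]mulr1 -hDt /Dt /g !mulr_sumr; apply: eq_bigr => q _.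
  rewrite (mulrCA (v p)) -hnull; ring.
have hvg : \sum_(p < n) v p * g p = bil M v v.
  rewrite /g /bil exchange_big; apply: eq_bigr => q _; rewrite mulr_sumr.
  apply: eq_bigr => p _; ring.
have step2 : forall k, g k = v k * bil M v v.
  move=> k; rewrite -hvg mulr_sumr {1}/g; apply: eq_bigr => p _.
  rewrite hMs step1; ring.
have hHij : forall i j, H i j = (tr H / (n%:R - 2)) * (@idf C n i j - 2 * v i * v j).
  move=> i j.
  have e : (n%:R - 2) * H i j = tr H * @idf C n i j - M i j by rewrite /M; ring.
  have e' : H i j = (tr H * @idf C n i j - M i j) / (n%:R - 2).
    by rewrite -e mulrC mulrA mulVf ?mul1r.
  rewrite e' step1 step2 hm2; field; exact: hn0.
exists (tr H / (n%:R - 2)); split.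
  apply: divr_ge0; last exact: ltW.
  by move: htr; rewrite mul0r subr0.
move=> i j k l; rewrite hR hS0 add0r /odot !hHij; ring.
Qed.
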